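(* Let $n \geq 2$ be an integer and let $Q_{4n} = \langle a, b \mid a^{2n} = e,\ a^{n} = b^2,\ ab = ba^{-1} \rangle$ be the dicyclic group of order $4n$. Then the order supergraph $\mathcal{S}(Q_{4n})$ is cyclically separable if and only if $n$ is not a power of $2$.
   Context: All graphs are simple and undirected. For a finite group $G$, the order supergraph $\mathcal{S}(G)$ is the graph with vertex set $G$ in which two distinct vertices $x,y$ are adjacent if and only if the order of $x$ divides the order of $y$ or the order of $y$ divides the order of $x$. For a graph $\Gamma$, a vertex cutset is a set $S$ of vertices such that $\Gamma - S$ is disconnected; a cyclic vertex cutset is a vertex cutset $S$ such that $\Gamma - S$ has at least two connected components each of which contains a cycle. $\Gamma$ is called cyclically separable if it has a cyclic vertex cutset. *)

(* Defs.v *)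
From mathcomp Require Import all_boot all_fingroup.
Set Implicit Arguments. Unset Strict Implicit. Unset Printing Implicit Defensive.
Local Open Scope group_scope.

(* Simple undirected graphs are given by a vertex set V : {set T} and an
   adjacency relation e : rel T (assumed symmetric and irreflexive). *)

Definition osg_adj (gT : finGroupType) : rel gT :=
  fun x y => (x != y) && ((#[x] %| #[y]) || (#[y] %| #[x])).

Definition rel_in (T : finType) (U : {set T}) (e : rel T) : rel T :=
  fun x y => [&& x \in U, y \in U & e x y].

Definition disconnected_on (T : finType) (U : {set T}) (e : rel T) : Prop :=
  exists x y, [/\ x \in U, y \in U & ~~ connect (rel_in U e) x y].

Definition component_of (T : finType) (U : {set T}) (e : rel T) (C : {set T}) : Prop :=
  exists2 x, x \in U & C = [set y in U | connect (rel_in U e) x y].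

Definition is_cycle_in (T : finType) (U : {set T}) (e : rel T) (c : seq T) : bool :=
  [&& 3 <= size c, uniq c, all (fun x => x \in U) c & path.cycle (rel_in U e) c].

Definition vertex_cutset (T : finType) (V : {set T}) (e : rel T) (S : {set T}) : Prop :=
  S \subset V /\ disconnected_on (V :\: S) e.

Definition cyclic_vertex_cutset (T : finType) (V : {set T}) (e : rel T) (S : {set T}) : Prop :=
  vertex_cutset V e S /\
  exists C1 C2 : {set T},
    [/\ component_of (V :\: S) e C1, component_of (V :\: S) e C2, C1 != C2,
        (exists c, is_cycle_in C1 e c) & (exists c, is_cycle_in C2 e c)].

Definition cyclically_separable (T : finType) (V : {set T}) (e : rel T) : Prop :=
  exists S : {set T}, cyclic_vertex_cutset V e S.

(* Main.v *)
Require Import Defs.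
From mathcomp Require Import all_boot all_fingroup all_solvable.
From mathcomp Require Import zify.
Local Open Scope group_scope.

Lemma ord4 (gT : finGroupType) (z w : gT) : z ^+ 2 = w -> #[w] = 2%N -> #[z] = 4%N.
Proof.
move=> zw ow.
have d4 : (#[z] %| 2 ^ 2)%N.
  by rewrite order_dvdn expgM -/(z ^+ 2) zw -ow expg_order.
have n2 : ~~ (#[z] %| 2)%N.
  by rewrite order_dvdn zw; apply/eqP => w1; move: ow; rewrite w1 order1.
case/(@dvdn_pfactor 2 _ 2 isT): d4 => [[|[|[|i]]]] //= _ E;
  by rewrite E in n2.
Qed.

Lemma odd_facts (m : nat) : odd m -> (3 <= m)%N ->
  [/\ ~~ (m %| 4)%N, ~~ (4 %| m)%N, ~~ (m.*2 %| 4)%N, ~~ (4 %| m.*2)%N & ~~ (m %| 2)%N].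
Proof.
move=> om m3.
have [q Em] : exists q, m = q.*2.+1 by exists m./2; rewrite -[in LHS](odd_double_half m) om.
subst m. rewrite -!addnn in m3 *.
have q1 : (1 <= q)%N by lia.
split; apply/negP => H; try lia;
  have /dvdn_leq L := H; have E1 : q = 1%N by lia.
all: by subst q; move: H.
Qed.

Lemma pow2_complete (gT : finGroupType) (G : {group gT}) (k : nat) (U : {set gT}) :
  #|G| = (2 ^ k)%N -> U \subset G -> ~ disconnected_on U (@osg_adj gT).
Proof.
move=> oG sUG [u [v [uU vU]]]; apply/negP/negPn.
have [-> | nuv] := eqVneq u v; first exact: connect0.
apply: connect1; rewrite /rel_in uU vU /osg_adj nuv /=.
have du : (#[u] %| 2 ^ k)%N by rewrite -oG order_dvdG // (subsetP sUG).
have dv : (#[v] %| 2 ^ k)%N by rewrite -oG order_dvdG // (subsetP sUG).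
case/(@dvdn_pfactor 2 _ _ isT): du => i _ ->.
case/(@dvdn_pfactor 2 _ _ isT): dv => j _ ->.
by case: (leqP i j) => h; [rewrite dvdn_exp2l | rewrite orbC dvdn_exp2l // ltnW].
Qed.

Theorem mainTheorem2 (n : nat) (gT : finGroupType) (G : {group gT}) :
  2 <= n ->
  G \isog Grp (a : b : a ^+ (2 * n) = 1, a ^+ n = b ^+ 2, a * b = b * a^-1) ->
  #|G| = (4 * n)%N ->
  (cyclically_separable G (@osg_adj gT) <-> ~ (exists k, n = (2 ^ k)%N)).
Proof.
move=> n2 isoG oG; split.
  move=> [S [[_ dis] _]] [k nk].
  apply: (@pow2_complete gT G k.+2 (G :\: S)) => //; last exact: subsetDl.
  by rewrite oG nk expnS expnS mulnA.
move=> npow.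
move/isoGrp_hom: isoG; rewrite /Presentation.hom /=.
case/existsP=> [[a b]] /= /eqP [eG e1 e2 e3].
have aG : a \in G by rewrite -eG mem_gen // inE cycle_id.
have bG : b \in G by rewrite -eG mem_gen // inE cycle_id orbT.
have nab : <[b]> \subset 'N(<[a]>).
  rewrite cycle_subG; apply/normP; rewrite -cycleJ.
  have -> : a ^ b = a^-1 by rewrite conjgE e3 mulKg.
  exact: cycleV.
have GM : <[a]> * <[b]> = G by rewrite -norm_joinEr.
have := mul_cardG <[a]> <[b]>; rewrite GM oG -!orderE => cardE.
have b2a : b ^+ 2 \in <[a]> :&: <[b]> by rewrite inE mem_cycle andbT -e2 mem_cycle.
have I2 : (#[b] <= 2 * #|<[a]> :&: <[b]>|)%N.
  have sI : <[b ^+ 2]> \subset <[a]> :&: <[b]> by rewrite cycle_subG.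
  have L := subset_leq_card sI.
  rewrite -orderE orderXgcd in L.
  have g2 : (gcdn #[b] 2 <= 2)%N by apply: dvdn_leq => //; apply: dvdn_gcdr.
  have gd : (gcdn #[b] 2 %| #[b])%N by apply: dvdn_gcdl.
  rewrite -{1}(divnK gd).
  by apply: (@leq_trans (#[b] %/ gcdn #[b] 2 * 2)); [rewrite leq_mul2l g2 orbT | rewrite mulnC leq_mul2l L orbT].
have oa_dvd : (#[a] %| 2 * n)%N by rewrite order_dvdn e1.
have oa : #[a] = (2 * n)%N.
  apply/eqP; rewrite eqn_leq dvdn_leq ?muln_gt0 //=; last by lia.
  have bpos : (0 < #[b])%N by apply: order_gt0.
  have Ipos : (0 < #|<[a]> :&: <[b]>|)%N by apply: cardG_gt0.
  have h1 : (#[a] * #[b] <= #[a] * (2 * #|<[a]> :&: <[b]>|))%N by rewrite leq_mul2l I2 orbT.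
  rewrite cardE in h1.
  move: h1 Ipos; set I := #|_|; move=> h1 Ipos.
  have h2 : (4 * n * I <= (2 * #[a]) * I)%N by move: h1; rewrite !mulnA (mulnC #[a]).
  rewrite leq_pmul2r // in h2; lia.
have n0 : (0 < n)%N by lia.
have [m om nE] := @pfactor_coprime 2 n isT n0.
rewrite coprime2n in om.
move: nE; set k := logn 2 n => nE.
have m3 : (3 <= m)%N.
  case: m om nE => [|[|[|m]]] //= om nE.
  by case: npow; exists k; rewrite nE mul1n.
have oa' : #[a] = (m * 2 ^ k.+1)%N by rewrite oa nE expnS mulnCA.
set x := a ^+ (2 ^ k.+1); set y := a ^+ (2 ^ k); set c := a * b.
have ox : #[x] = m by rewrite orderXdiv oa' ?mulnK ?expn_gt0 // dvdn_mull.
have oxi : #[x^-1] = m by rewrite orderV.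
have oy : #[y] = m.*2.
  rewrite orderXdiv oa' expnS mulnA ?mulnK ?expn_gt0 ?muln2 // dvdn_mull //.
have oan : #[a ^+ n] = 2%N by rewrite orderXdiv oa ?mulnK // dvdn_mull.
have ob : #[b] = 4%N by exact: (@ord4 _ _ _ (esym e2) oan).
have obi : #[b^-1] = 4%N by rewrite orderV.
have oc : #[c] = 4%N.
  apply: (@ord4 _ _ _ _ oan); rewrite e2 /c expgS expg1 expgS expg1 {1}e3 -mulgA.
  by rewrite mulKg.
have [f1 f2 f3 f4 f5] := @odd_facts m om m3.
have m4 : (m == 4%N) = false by apply/negbTE; apply: contra f1 => /eqP->.
have m24 : (m.*2 == 4%N) = false by apply/negbTE; apply: contra f3 => /eqP->.
set U := [set x; x^-1; y; b; b^-1; c].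
have UG : U \subset G.
  apply/subsetP => z; rewrite !inE -!orbA.
  by move=> /orP[/eqP->|/orP[/eqP->|/orP[/eqP->|/orP[/eqP->|/orP[/eqP->|/eqP->]]]]];
    rewrite ?groupM ?groupV ?groupX.
have ordU : forall z, z \in U -> [\/ #[z] = 4%N, #[z] = m | #[z] = m.*2].
  move=> z; rewrite !inE -!orbA.
  by move=> /orP[/eqP->|/orP[/eqP->|/orP[/eqP->|/orP[/eqP->|/orP[/eqP->|/eqP->]]]]];
    rewrite ?ox ?oxi ?oy ?ob ?obi ?oc; [apply: Or32|apply: Or32|apply: Or33|apply: Or31|apply: Or31|apply: Or31].
have WU : G :\: (G :\: U) = U by rewrite setDDr setDv set0U; apply/setIidPr.
set e := @osg_adj gT.
have cl : closed (rel_in U e) [pred z : gT | #[z] == 4%N].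
  move=> u v /and3P[uU vU /andP[_ d]]; rewrite !inE.
  move: d; case: (ordU u uU) => ->; case: (ordU v vU) => ->;
    by rewrite ?m4 ?m24 ?(negbTE f1) ?(negbTE f2) ?(negbTE f3) ?(negbTE f4).
have ordneq : forall u v : gT, #[u] != #[v] -> u != v.
  by move=> u v; apply: contra => /eqP->.
have d_xxi : x != x^-1.
  apply/negP => /eqP E; have : x ^+ 2 = 1 by rewrite expgS expg1 {2}E mulgV.
  by move/eqP; rewrite -order_dvdn ox (negbTE f5).
have d_xy : x != y by apply: ordneq; rewrite ox oy; lia.
have d_xiy : x^-1 != y by apply: ordneq; rewrite oxi oy; lia.
have d_bbi : b != b^-1.
  apply/negP => /eqP E; have : b ^+ 2 = 1 by rewrite expgS expg1 {2}E mulgV.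
  by move/eqP; rewrite -order_dvdn ob.
have d_bc : b != c.
  apply/negP => /eqP E; have a1 : a = 1 by apply: (mulIg b); rewrite mul1g; exact: (esym E).
  by move: oa; rewrite a1 order1 => /(congr1 odd); rewrite oddM.
have d_bic : b^-1 != c.
  apply/negP => /eqP E.
  have a1 : a = (b ^+ 2)^-1 by rewrite -(mulgK b a) -/c -E expgS expg1 invMg.
  move: oa; rewrite a1 orderV -e2 oan => /eqP; rewrite -{1}(muln1 2) eqn_mul2l /= => /eqP h.
  by rewrite -h in n2.
have inU : forall z, z \in [:: x; x^-1; y; b; b^-1; c] -> z \in U.
  by move=> z; rewrite !inE -!orbA.
have xU : x \in U by apply: inU; rewrite !inE eqxx.
have xiU : x^-1 \in U by apply: inU; rewrite !inE eqxx ?orbT.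
have yU : y \in U by apply: inU; rewrite !inE eqxx ?orbT.
have bU : b \in U by apply: inU; rewrite !inE eqxx ?orbT.
have biU : b^-1 \in U by apply: inU; rewrite !inE eqxx ?orbT.
have cU : c \in U by apply: inU; rewrite !inE eqxx ?orbT.
have mm2 : (m %| m.*2)%N by rewrite -muln2 dvdn_mulr.
have E1 : rel_in U e x x^-1 by rewrite /rel_in xU xiU /e /osg_adj d_xxi ox oxi dvdnn.
have E2 : rel_in U e x^-1 y by rewrite /rel_in xiU yU /e /osg_adj d_xiy oxi oy mm2.
have E3 : rel_in U e y x by rewrite /rel_in xU yU /e /osg_adj eq_sym d_xy ox oy mm2 orbT.
have E4 : rel_in U e b b^-1 by rewrite /rel_in bU biU /e /osg_adj d_bbi ob obi dvdnn.
have E5 : rel_in U e b^-1 c by rewrite /rel_in biU cU /e /osg_adj d_bic obi oc dvdnn.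
have E6 : rel_in U e c b by rewrite /rel_in bU cU /e /osg_adj eq_sym d_bc ob oc dvdnn.
have ncxb : ~~ connect (rel_in U e) b x.
  apply/negP => /(closed_connect cl); rewrite !inE ob ox m4 //.
exists (G :\: U); split.
  split; first exact: subsetDl.
  rewrite WU; exists x, b; split => //.
  by apply: contra ncxb => /(closed_connect cl); rewrite !inE ob ox m4.
rewrite WU.
set C1 := [set z in U | connect (rel_in U e) x z].
set C2 := [set z in U | connect (rel_in U e) b z].
have xC1 : x \in C1 by rewrite inE xU connect0.
have xiC1 : x^-1 \in C1 by rewrite inE xiU connect1.
have yC1 : y \in C1 by rewrite inE yU (connect_trans (connect1 E1) (connect1 E2)).
have bC2 : b \in C2 by rewrite inE bU connect0.
have biC2 : b^-1 \in C2 by rewrite inE biU connect1.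
have cC2 : c \in C2 by rewrite inE cU (connect_trans (connect1 E4) (connect1 E5)).
exists C1, C2; split.
- by exists x.
- by exists b.
- by apply/negP => /eqP E; move: xC1; rewrite E inE (negbTE ncxb) andbF.
- exists [:: x; x^-1; y].
  have F1 : rel_in C1 e x x^-1 by rewrite /rel_in xC1 xiC1; case/and3P: E1.
  have F2 : rel_in C1 e x^-1 y by rewrite /rel_in yC1 xiC1; case/and3P: E2.
  have F3 : rel_in C1 e y x by rewrite /rel_in xC1 yC1; case/and3P: E3.
  rewrite /is_cycle_in /= xC1 xiC1 yC1 F1 F2 F3 !inE /=.
  by rewrite !negb_or d_xxi d_xy d_xiy.
- exists [:: b; b^-1; c].
  have F1 : rel_in C2 e b b^-1 by rewrite /rel_in bC2 biC2; case/and3P: E4.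
  have F2 : rel_in C2 e b^-1 c by rewrite /rel_in cC2 biC2; case/and3P: E5.
  have F3 : rel_in C2 e c b by rewrite /rel_in bC2 cC2; case/and3P: E6.
  rewrite /is_cycle_in /= bC2 biC2 cC2 F1 F2 F3 !inE /=.
  by rewrite !negb_or d_bbi d_bc d_bic.
Qed.
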